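(* Let $d\ge 3$, let $\mathcal M$ be a model of $\mathrm{PQM}_d$ with domain $\mathbb M$, and let $\kappa:\mathbb M\to\mathbb H_d$ be the function such that for all $m\in\mathbb M$, $p\in\mathbb H_d$: $[m:p]^{\mathcal M}\iff\kappa(m)\le p$. Then for every $v\in\mathbb V_d$ there exists $m\in\mathbb M$ with $\kappa(m)=v$; i.e. $\mathbb V_d\subseteq\kappa(\mathbb M)$.
   Context: Notation. For $d\ge 1$, $\mathbb H_d$ is the set of complex linear subspaces of $\mathbb C^d$, ordered by inclusion $\le$, with $\top=\mathbb C^d$, $\bot=\{0\}$, $p^\bot$ the orthogonal complement, $p\wedge q=p\cap q$ and $p\vee q=p+q$. $\mathbb V_d\subseteq\mathbb H_d$ is the set of one-dimensional subspaces (rays). $\mathbb U_d$ is the set of unitary operators on $\mathbb C^d$, and for $U\in\mathbb U_d$, $p\in\mathbb H_d$, $U(p)=\{Uv: v\in p\}$. The Sasaki projection is $p\,\&\,q := q\cap(q^\bot+p)$. Subspaces $p,q$ are compatible iff $p=(p\wedge q)\vee(p\wedge q^\bot)$. Language $\mathcal L_d$: a first-order language without equality and without constants, having a unary function symbol $u_U$ for each $U\in\mathbb U_d$, a unary function symbol $\pi_q$ for each $q\in\mathbb H_d$, and a unary relation symbol $[\,\cdot:p]$ for each $p\in\mathbb H_d$. Theory $\mathrm{PQM}_d$ (over $\mathcal L_d$) has the following axioms, for all $p,q\in\mathbb H_d$ and $U\in\mathbb U_d$: ($\neg\bot$) $\exists x\,\neg[x:\bot]$; ($\top$) $\forall x\,[x:\top]$;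 ($\le$) if $p\le q$: $\forall x\,([x:p]\to[x:q])$; ($\wedge$) if $p,q$ are compatible: $\forall x\,([x:p]\wedge[x:q]\to[x:p\wedge q])$; ($\pi_i$) $\forall x\,([x:p]\to[\pi_q(x):p\,\&\,q])$; ($\pi_c$) if $p\le q$: $\forall x\,([\pi_p(\pi_q(x)):\bot]\to[\pi_p(x):\bot])$; ($\pi_\bot$) $\forall x\,([\pi_q(x):\bot]\to[x:q^\bot])$; ($u_i$) $\forall x\,([x:p]\to[u_U(x):U(p)])$; ($u_e$) $\forall x\,([u_U(x):p]\to[x:U^{-1}(p)])$. *)

(* Defs.v *)
From HB Require Import structures.
From mathcomp Require Import all_boot all_order all_algebra all_field.
From mathcomp Require Import complex reals.

Set Implicit Arguments.
Unset Strict Implicit.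
Unset Printing Implicit Defensive.

Import Order.TTheory GRing.Theory Num.Theory.
Local Open Scope ring_scope.

Definition cvec (R : realType) (d : nat) := 'rV[R[i]]_d.

(* H_d : complex linear subspaces of C^d *)
Definition subsp (R : realType) (d : nat) := {vspace cvec R d}.

Definition dotv (R : realType) (d : nat) (u v : cvec R d) : R[i] :=
  \sum_(k < d) u 0 k * (v 0 k)^*.

(* Gram-type matrix of the canonical basis of U: column i is conj of the
   i-th basis vector of U (padded by zeros); v *m ocompl_mx U has entries
   <v, b_i>. *)
Definition ocompl_mx (R : realType) (d : nat) (U : subsp R d) : 'M[R[i]]_d :=
  \matrix_(k < d, i < d) (((vbasis U)`_i : cvec R d) 0 k)^*.

Definition ocompl (R : realType) (d : nat) (U : subsp R d) : subsp R d :=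
  lker (linfun (mulmxr (ocompl_mx U))).

Definition sasaki (R : realType) (d : nat) (p q : subsp R d) : subsp R d :=
  (q :&: (ocompl q + p))%VS.

Definition compatible (R : realType) (d : nat) (p q : subsp R d) : Prop :=
  p = ((p :&: q) + (p :&: ocompl q))%VS.

(* V_d : rays (one-dimensional subspaces) *)
Definition ray (R : realType) (d : nat) (p : subsp R d) : Prop := \dim p = 1%N.

Definition unitary_mx (R : realType) (d : nat) (U : 'M[R[i]]_d) : bool :=
  U *m (map_mx (@Num.conj _) U)^T == 1%:M.

Definition unitary (R : realType) (d : nat) := {U : 'M[R[i]]_d | unitary_mx U}.

(* the operator with matrix A acting on v : A v = (A *m v^T)^T = v *m A^T
   (see mx_actE); written with mulmxr so that it is canonically linear *)
Definition mx_act (R : realType) (d : nat) (A : 'M[R[i]]_d) :=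
  @mulmxr _ 1 d d (A^T : 'M[R[i]]_d).

Lemma mx_actE (R : realType) (d : nat) (A : 'M[R[i]]_d) (v : cvec R d) :
  mx_act A v = (A *m v^T)^T.
Proof. by rewrite /mx_act /= trmx_mul trmxK. Qed.

Definition uimg (R : realType) (d : nat) (U : unitary R d) (p : subsp R d)
  : subsp R d := (linfun (mx_act (val U)) @: p)%VS.

Definition uimg_inv (R : realType) (d : nat) (U : unitary R d) (p : subsp R d)
  : subsp R d := (linfun (mx_act (invmx (val U))) @: p)%VS.

(* A model of PQM_d (language L_d without equality and constants):
   a domain, interpretations of the function symbols u_U, pi_q and of the
   relation symbols [ . : p ], satisfying all axioms of PQM_d. *)
Record PQM_model (R : realType) (d : nat) := {
  carrier :> Type;
  u_ : unitary R d -> carrier -> carrier;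
  pi_ : subsp R d -> carrier -> carrier;
  sat : carrier -> subsp R d -> Prop;   (* sat x p  <->  [x : p] *)
  ax_nbot : exists x, ~ sat x 0%VS;
  ax_top : forall x, sat x fullv;
  ax_le : forall p q : subsp R d, (p <= q)%VS -> forall x, sat x p -> sat x q;
  ax_wedge : forall p q : subsp R d, compatible p q ->
    forall x, sat x p -> sat x q -> sat x (p :&: q)%VS;
  ax_pi_i : forall (p q : subsp R d) x, sat x p -> sat (pi_ q x) (sasaki p q);
  ax_pi_c : forall p q : subsp R d, (p <= q)%VS ->
    forall x, sat (pi_ p (pi_ q x)) 0%VS -> sat (pi_ p x) 0%VS;
  ax_pi_bot : forall (q : subsp R d) x, sat (pi_ q x) 0%VS -> sat x (ocompl q);
  ax_u_i : forall (p : subsp R d) (U : unitary R d) x,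
    sat x p -> sat (u_ U x) (uimg U p);
  ax_u_e : forall (p : subsp R d) (U : unitary R d) x,
    sat (u_ U x) p -> sat x (uimg_inv U p)
}.

(* Main.v *)
Require Import Defs.
From HB Require Import structures.
From mathcomp Require Import all_boot all_order all_algebra all_field.
From mathcomp Require Import complex reals.
Import Order.TTheory GRing.Theory Num.Theory.
Set Implicit Arguments.
Unset Strict Implicit.
Local Open Scope ring_scope.

Lemma dim_le (R : realType) (d : nat) (U : subsp R d) : (\dim U <= d)%N.
Proof.
have := dimvS (subvf U); rewrite dimvf.
by rewrite /dim /= mul1n.
Qed.

Lemma ocomplP (R : realType) (d : nat) (U : subsp R d) (x u : cvec R d) :
  x \in ocompl U -> u \in U -> dotv x u = 0.
Proof.
rewrite /ocompl memv_ker lfunE /= => /eqP hx hu.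
have hj : forall j : 'I_d, \sum_k x 0 k * (((vbasis U)`_j : cvec R d) 0 k)^* = 0.
  move=> j; have := congr1 (fun A : 'M_(1,d) => A 0 j) hx.
  by rewrite !mxE; under eq_bigr do rewrite mxE.
rewrite /dotv (coord_vbasis hu).
under eq_bigr => k _ do rewrite summxE rmorph_sum mulr_sumr.
rewrite exchange_big /= big1 // => i _.
under eq_bigr => k _ do rewrite mxE rmorphM mulrCA.
rewrite -mulr_sumr.
have := hj (widen_ord (@dim_le _ _ U) i); rewrite /= => ->.
by rewrite mulr0.
Qed.

Lemma dotvDr (R : realType) (d : nat) (x u w : cvec R d) :
  dotv x (u + w) = dotv x u + dotv x w.
Proof.
rewrite /dotv.
transitivity (\sum_(k < d) (x 0 k * (u 0 k)^* + x 0 k * (w 0 k)^*));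
  last by rewrite big_split.
apply: (@eq_bigr _ _ _ (ordinal d)).
move=> k _.
have -> : (u + w) 0 k = u 0 k + w 0 k by rewrite (@mxE _ 1 d).
by rewrite rmorphD mulrDr.
Qed.

Lemma dotvDl (R : realType) (d : nat) (x u w : cvec R d) :
  dotv (u + w) x = dotv u x + dotv w x.
Proof.
rewrite /dotv.
transitivity (\sum_(k < d) (u 0 k * (x 0 k)^* + w 0 k * (x 0 k)^*));
  last by rewrite big_split.
apply: (@eq_bigr _ _ _ (ordinal d)) => k _.
have -> : (u + w) 0 k = u 0 k + w 0 k by rewrite (@mxE _ 1 d).
by rewrite mulrDl.
Qed.

Lemma dotv0r (R : realType) (d : nat) (x : cvec R d) : dotv x 0 = 0.
Proof.
rewrite /dotv big1 // => k _.
have -> : (0 : cvec R d) 0 k = 0 by rewrite (@mxE _ 1 d).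
by rewrite rmorph0 mulr0.
Qed.

Lemma dotv_self (R : realType) (d : nat) (x : cvec R d) :
  x != 0 -> dotv x x != 0.
Proof.
move=> hx; apply/eqP => h; move/eqP: hx; apply; apply/rowP => k.
rewrite mxE.
have h2 : \sum_(k < d | true) `|x 0 k| ^+ 2 = dotv x x.
  by rewrite /dotv; apply: (@eq_bigr _ _ _ (ordinal d)) => j _; rewrite normCK.
rewrite h in h2.
have := @psumr_eq0P _ _ _ _ (fun j _ => exprn_ge0 2 (normr_ge0 (x 0 j))) h2 k isT.
by move/eqP; rewrite sqrf_eq0 normr_eq0 => /eqP.
Qed.

Lemma ray_eq (R : realType) (d : nat) (U V : subsp R d) :
  (U <= V)%VS -> \dim V = 1%N -> U != 0%VS -> U = V.
Proof.
move=> hUV hV hU; apply/eqP; rewrite eqEdim hUV hV /=.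
by rewrite lt0n dimv_eq0.
Qed.

Lemma step (R : realType) (d : nat) (M : PQM_model R d) (kappa : M -> subsp R d)
  (hkappa : forall (m : M) (p : subsp R d), sat m p <-> (kappa m <= p)%VS)
  (m : M) (W : subsp R d) (x w : cvec R d) :
  \dim W = 1%N -> x \in kappa m -> w \in W -> dotv x w != 0 ->
  kappa (pi_ W m) = W.
Proof.
move=> hW hx hw hxw.
have hm : sat m (kappa m) by apply/hkappa; exact: subvv.
have := ax_pi_i W hm => /hkappa hs.
apply: (ray_eq _ hW).
  apply: subv_trans hs _; exact: capvSl.
apply/eqP => h0.
have : sat (pi_ W m) 0%VS by apply/hkappa; rewrite h0 subvv.
move/ax_pi_bot/hkappa => hk.
by move/eqP: hxw; apply; apply: ocomplP hw; apply: (subvP hk).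
Qed.


Theorem mainTheorem13 (R : realType) (d : nat) (hd : (3 <= d)%N)
  (M : PQM_model R d) (kappa : M -> subsp R d)
  (hkappa : forall (m : M) (p : subsp R d), sat m p <-> (kappa m <= p)%VS) :
  forall v : subsp R d, ray v -> exists m : M, kappa m = v.
Proof.
move=> v hv; rewrite /ray in hv.
have [m0 hm0] := ax_nbot M.
have hk0 : kappa m0 != 0%VS.
  by apply/eqP => h; apply: hm0; apply/hkappa; rewrite h subvv.
set x := vpick (kappa m0).
have hx : x \in kappa m0 by exact: memv_pick.
have hx0 : x != 0 by rewrite vpick0.
set y := vpick v.
have hy : y \in v by exact: memv_pick.
have hy0 : y != 0.
  by rewrite vpick0; apply/eqP => h; move: hv; rewrite h dimv0.
have [hxy|hxy] := eqVneq (dotv x y) 0; last first.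
  by exists (pi_ v m0); exact: (step hkappa hv hx hy hxy).
have hxxy : dotv x (x + y) != 0 by rewrite dotvDr hxy addr0 dotv_self.
have hxy0 : x + y != 0.
  by apply/eqP => h; move: hxxy; rewrite h dotv0r eqxx.
set W := <[x + y]>%VS.
have hW : \dim W = 1%N by rewrite dim_vline hxy0.
have hm1 : kappa (pi_ W m0) = W.
  exact: (step hkappa hW hx (memv_line _) hxxy).
exists (pi_ v (pi_ W m0)).
apply: (@step _ _ _ _ hkappa _ _ (x + y) y hv _ hy).
  by rewrite hm1 memv_line.
by rewrite dotvDl hxy add0r dotv_self.
Qed.
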